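(* Consider proportional reinsurance with $I=1$, $m(t,y,u)=p-q+qu$ and $\sigma(t,y,u)=\sigma_0u$, where $p<q$ and $\sigma_0>0$. Under the ansatz $V(t,x,y)=U(x)\tilde V(t,y)$ for the value function, the optimal reinsurance-investment strategy (the maximiser in the HJB equation) is given in feedback form by $(u^*(t,x,y),a^*(t,x,y))$ with $$u^*(t,x,y)=\begin{cases}0,&(t,x,y)\in A_0,\\ \dfrac{(\sigma_1(t,y)^2+\sigma_2(t,y)^2)q-\mu(t,y)\sigma_0\sigma_1(t,y)}{\sigma_0^2\sigma_2(t,y)^2A(x)},&(t,x,y)\in(A_0\cup A_1)^c,\\ 1,&(t,x,y)\in A_1,\end{cases}$$ where $A_0=\{(t,x,y)\in[0,T]\times\mathbb R^2: q<\frac{\mu(t,y)\sigma_1(t,y)\sigma_0}{\sigma_1(t,y)^2+\sigma_2(t,y)^2}\}$, $A_1=\{(t,x,y)\in[0,T]\times\mathbb R^2: q>\frac{\sigma_0[\sigma_2(t,y)^2A(x)\sigma_0+\mu(t,y)\sigma_1(t,y)]}{\sigma_1(t,y)^2+\sigma_2(t,y)^2}\}$, and $$a^*(t,x,y)=\frac{\mu(t,y)-A(x)\sigma_0u^*(t,x,y)\sigma_1(t,y)}{A(x)(\sigma_1(t,y)^2+\sigma_2(t,y)^2)}.$$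
   Context: Independent Brownian motions $W^1,W^2,W^Y$; environmental process $dY_t=\mu_Y(t,Y_t)dt+\sigma_Y(t,Y_t)dW^Y_t$ with bounded Lipschitz $C^1$ coefficients; $\mu,\sigma_1,\sigma_2$ bounded continuous positive Lipschitz functions of $(t,y)$ with $\sigma_1+\sigma_2$ bounded away from zero. With retention $u_t\in[0,1]$ (fraction of risk kept) and amount $a_t$ invested in the risky asset, the surplus is $dX_t=\{m(t,Y_t,u_t)+a_t\mu(t,Y_t)\}dt+\{\sigma(t,Y_t,u_t)+a_t\sigma_1(t,Y_t)\}dW^1_t+a_t\sigma_2(t,Y_t)dW^2_t$, and the insurer maximises $\mathbb E[U(X_T)]$ over adapted strategies with $\mathbb E\int_0^Ta_t^2dt<\infty$; $V(t,x,y)$ denotes the value function, with HJB equation $0=V_t+\sup_{u,a}[\{m+a\mu\}V_x+\frac12\{(\sigma+a\sigma_1)^2+a^2\sigma_2^2\}V_{xx}]+\mu_YV_y+\frac12\sigma_Y^2V_{yy}$. $U$ is a SAHARA utility: $A(x):=-U''(x)/U'(x)=\alpha/\sqrt{b^2+(x-d)^2}$, $\alpha>0$, $b>0$, $d\in\mathbb R$. In this section the paper works under the ansatz that $V(t,x,y)=U(x)\tilde V(t,y)$ for some function $\tilde V$. *)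

(* Defs.v *)
From Stdlib Require Import Reals.
From Coquelicot Require Import Coquelicot.
Open Scope R_scope.

Definition sahara_A (alpha b d x : R) : R :=
  alpha / sqrt (b ^ 2 + (x - d) ^ 2).

Definition m_prop (p q u : R) : R := p - q + q * u.
Definition sigma_prop (sigma0 u : R) : R := sigma0 * u.

(* The (u,a)-dependent part of the HJB equation:
   {m + a mu} V_x + 1/2 {(sigma + a sigma1)^2 + a^2 sigma2^2} V_xx. *)
Definition hjb_term (p q sigma0 mu s1 s2 Vx Vxx u a : R) : R :=
  (m_prop p q u + a * mu) * Vx
  + / 2 * ((sigma_prop sigma0 u + a * s1) ^ 2 + a ^ 2 * s2 ^ 2) * Vxx.

(* Regions A_0 and A_1 (membership at (t,x,y), expressed through the
   values mu(t,y), sigma1(t,y), sigma2(t,y) and Ax = A(x)). *)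
Definition in_A0 (q sigma0 mu s1 s2 : R) : Prop :=
  q < mu * s1 * sigma0 / (s1 ^ 2 + s2 ^ 2).
Definition in_A1 (q sigma0 mu s1 s2 Ax : R) : Prop :=
  q > sigma0 * (s2 ^ 2 * Ax * sigma0 + mu * s1) / (s1 ^ 2 + s2 ^ 2).

Definition u_star (q sigma0 mu s1 s2 Ax : R) : R :=
  if Rlt_dec q (mu * s1 * sigma0 / (s1 ^ 2 + s2 ^ 2)) then 0
  else if Rgt_dec q (sigma0 * (s2 ^ 2 * Ax * sigma0 + mu * s1) / (s1 ^ 2 + s2 ^ 2))
  then 1
  else ((s1 ^ 2 + s2 ^ 2) * q - mu * sigma0 * s1) / (sigma0 ^ 2 * s2 ^ 2 * Ax).

Definition a_star (q sigma0 mu s1 s2 Ax : R) : R :=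
  (mu - Ax * sigma0 * u_star q sigma0 mu s1 s2 Ax * s1) / (Ax * (s1 ^ 2 + s2 ^ 2)).

(* Main.v *)
Require Import Defs.
From Stdlib Require Import Reals Lra Psatz.
From Coquelicot Require Import Coquelicot.
Open Scope R_scope.


Lemma hjb_id p q s0 mu s1 s2 A P w u a us as_ :
  mu = A * (s1 * (s0 * us + as_ * s1) + as_ * s2 ^ 2) ->
  hjb_term p q s0 mu s1 s2 (P*w) (-(A*P)*w) us as_
  - hjb_term p q s0 mu s1 s2 (P*w) (-(A*P)*w) u a
  = P * w * ( - (q - A * s0 * (s0 * us + as_ * s1)) * (u - us)
      + A / 2 * ((s0 * (u - us) + (a - as_) * s1) ^ 2 + (a - as_) ^ 2 * s2 ^ 2)).
Proof. intros ->. unfold hjb_term, m_prop, sigma_prop. field. Qed.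

Lemma core p q s0 mu s1 s2 A P w :
  0 < s0 -> 0 < s1 -> 0 < s2 -> 0 < mu -> 0 < A -> 0 < P -> 0 < w ->
    let Vx := P * w in
    let Vxx := (-(A*P)) * w in
    let us := u_star q s0 mu s1 s2 A in
    let as_ := a_star q s0 mu s1 s2 A in
    (in_A0 q s0 mu s1 s2 -> us = 0) /\
    (in_A1 q s0 mu s1 s2 A -> us = 1) /\
    (~ in_A0 q s0 mu s1 s2 ->
     ~ in_A1 q s0 mu s1 s2 A ->
     us = ((s1 ^ 2 + s2 ^ 2) * q - mu * s0 * s1)
          / (s0 ^ 2 * s2 ^ 2 * A)) /\
    0 <= us <= 1 /\
    (forall u a, 0 <= u <= 1 ->
       hjb_term p q s0 mu s1 s2 Vx Vxx u a
       <= hjb_term p q s0 mu s1 s2 Vx Vxx us as_) /\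
    (forall u a, 0 <= u <= 1 ->
       hjb_term p q s0 mu s1 s2 Vx Vxx u a
       = hjb_term p q s0 mu s1 s2 Vx Vxx us as_ ->
       u = us /\ a = as_).
Proof.
  intros H0 H1 H2 Hm HA HP Hw Vx Vxx us as_.
  set (S := s1 ^ 2 + s2 ^ 2).
  assert (ES : S = s1 ^ 2 + s2 ^ 2) by reflexivity.
  assert (Eus : us = u_star q s0 mu s1 s2 A) by reflexivity.
  assert (Eas : as_ = (mu - A * s0 * us * s1) / (A * S)) by reflexivity.
  clearbody us as_ S.
  assert (HS : 0 < S) by (rewrite ES; nra).
  assert (Has : mu = A * (s1 * (s0 * us + as_ * s1) + as_ * s2 ^ 2)).
  { rewrite Eas, ES. field. rewrite <- ES. split; lra. }
  assert (HG : 0 <= us <= 1 /\ forall u, 0 <= u <= 1 ->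
            0 <= - (q - A * s0 * (s0 * us + as_ * s1)) * (u - us)).
  { assert (EG : q - A * s0 * (s0 * us + as_ * s1)
                 = (q * S - A * s0^2 * s2^2 * us - s0 * s1 * mu) / S).
    { rewrite Eas, ES. field. rewrite <- ES. split; lra. }
    rewrite EG. rewrite Eus. unfold u_star. rewrite <- ES.
    destruct (Rlt_dec q (mu * s1 * s0 / S)) as [h|h].
    - apply Rlt_div_r in h; [|lra]. split; [lra|]. intros u Hu.
      match goal with |- 0 <= - (?N / S) * _ => replace (- (N / S)) with ((-N)/S) by (field; lra) end.
      apply Rmult_le_pos; [apply Rdiv_le_0_compat; lra | lra].
    - destruct (Rgt_dec q (s0 * (s2 ^ 2 * A * s0 + mu * s1) / S)) as [h'|h'].
      + apply Rgt_lt, Rlt_div_l in h'; [|lra]. split; [lra|]. intros u Hu.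
        match goal with |- 0 <= - (?N / S) * _ => replace (- (N / S) * (u - 1)) with (N/S * (1 - u)) by (field; lra) end.
        apply Rmult_le_pos; [apply Rdiv_le_0_compat; lra | lra].
      + assert (h1 : mu * s1 * s0 <= q * S).
        { apply Rnot_lt_le in h. apply Rle_div_l in h; lra. }
        assert (h2 : q * S <= s0 * (s2 ^ 2 * A * s0 + mu * s1)).
        { apply Rnot_gt_le in h'. apply Rle_div_r in h'; lra. }
        assert (hd : 0 < s0 ^ 2 * s2 ^ 2 * A) by (repeat apply Rmult_lt_0_compat; try apply pow_lt; lra).
        split.
        * split; [apply Rdiv_le_0_compat; lra|].
          apply Rle_div_l; [lra|]. nra.
        * intros u Hu. replace ((q * S - A * s0 ^ 2 * s2 ^ 2 * ((S * q - mu * s0 * s1) / (s0 ^ 2 * s2 ^ 2 * A)) - s0 * s1 * mu) / S) with 0.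
          -- lra.
          -- field. repeat split; lra. }
  destruct HG as [Hr HG].
  split; [|split; [|split; [|split; [exact Hr|split]]]].
  - intro h. rewrite Eus; unfold u_star; rewrite <- ES. destruct Rlt_dec; [reflexivity|]. unfold in_A0 in h; rewrite <- ES in h. contradiction.
  - intro h. rewrite Eus; unfold u_star; rewrite <- ES. unfold in_A1 in h; rewrite <- ES in h. destruct Rlt_dec as [h0|h0].
    + exfalso. apply Rlt_div_r in h0; [|lra]. apply Rgt_lt, Rlt_div_l in h; [|lra].
      assert (0 < s0 * s2^2 * A * s0) by (repeat apply Rmult_lt_0_compat; nra). nra.
    + destruct Rgt_dec; [reflexivity|contradiction].
  - intros h h'. rewrite Eus; unfold u_star; rewrite <- ES. unfold in_A0, in_A1 in *; rewrite <- ES in h, h'.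
    destruct Rlt_dec; [contradiction|]. destruct Rgt_dec; [contradiction|reflexivity].
  - intros u a Hu. subst Vx Vxx.
    pose proof (hjb_id p q s0 mu s1 s2 A P w u a us as_ Has) as E.
    pose proof (HG u Hu) as X.
    set (Q := (s0 * (u - us) + (a - as_) * s1) ^ 2 + (a - as_) ^ 2 * s2 ^ 2) in E.
    assert (0 <= Q) by (unfold Q; apply Rplus_le_le_0_compat; [apply pow2_ge_0 | apply Rmult_le_pos; apply pow2_ge_0]).
    assert (0 <= A/2*Q) by (apply Rmult_le_pos; lra).
    assert (0 < P*w) by (apply Rmult_lt_0_compat; lra).
    assert (0 <= P*w*(- (q - A * s0 * (s0 * us + as_ * s1)) * (u - us) + A/2*Q)) by (apply Rmult_le_pos; lra).
    lra.
  - intros u a Hu Heq. subst Vx Vxx.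
    pose proof (hjb_id p q s0 mu s1 s2 A P w u a us as_ Has) as E.
    pose proof (HG u Hu) as X.
    set (G := - (q - A * s0 * (s0 * us + as_ * s1)) * (u - us)) in *.
    set (Q := (s0 * (u - us) + (a - as_) * s1) ^ 2 + (a - as_) ^ 2 * s2 ^ 2) in E.
    assert (HQ1 : 0 <= (s0 * (u - us) + (a - as_) * s1) ^ 2) by (apply pow2_ge_0).
    assert (HQ2 : 0 <= (a - as_) ^ 2 * s2 ^ 2) by (apply Rmult_le_pos; apply pow2_ge_0).
    assert (HPw : 0 < P*w) by (apply Rmult_lt_0_compat; lra).
    assert (Z : G + A / 2 * Q = 0).
    { apply (Rmult_eq_reg_l (P*w)); [|lra]. lra. }
    assert (ZQ : A * Q = 0).
    { assert (0 <= A/2*Q) by (apply Rmult_le_pos; unfold Q; lra). nra. }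
    assert (Q = 0) by (apply Rmult_integral in ZQ; destruct ZQ; [lra|auto]).
    unfold Q in H.
    assert (Ha : (a - as_) ^ 2 * s2 ^ 2 = 0) by lra.
    assert (Ha' : a - as_ = 0) by (apply Rmult_integral in Ha; destruct Ha; nra).
    assert (Hu' : (s0 * (u - us)) ^ 2 = 0).
    { replace a with as_ in H by lra. nra. }
    assert (Hz : s0 * (u - us) = 0) by (destruct (Req_dec (s0 * (u - us)) 0) as [e|e]; [exact e | exfalso; apply (pow_nonzero _ 2 e); exact Hu']). apply Rmult_integral in Hz. split; [destruct Hz; lra | lra].
Qed.

Theorem proposition5p2
  (T p q sigma0 alpha b d : R)
  (mu sigma1 sigma2 : R -> R -> R)
  (U U' U'' : R -> R) (Vtilde : R -> R -> R)
  (hT : 0 < T) (hpq : p < q) (hs0 : 0 < sigma0)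
  (halpha : 0 < alpha) (hb : 0 < b)
  (hmu : forall t y, 0 < mu t y)
  (hs1 : forall t y, 0 < sigma1 t y)
  (hs2 : forall t y, 0 < sigma2 t y)
  (hU' : forall x, is_derive U x (U' x))
  (hU'' : forall x, is_derive U' x (U'' x))
  (hU'pos : forall x, 0 < U' x)
  (hA : forall x, - U'' x / U' x = sahara_A alpha b d x)
  (hV : forall t y, 0 <= t <= T -> 0 < Vtilde t y) :
  forall t x y, 0 <= t <= T ->
    let Ax := sahara_A alpha b d x in
    let Vx := U' x * Vtilde t y in
    let Vxx := U'' x * Vtilde t y in
    let us := u_star q sigma0 (mu t y) (sigma1 t y) (sigma2 t y) Ax in
    let as_ := a_star q sigma0 (mu t y) (sigma1 t y) (sigma2 t y) Ax in
    (in_A0 q sigma0 (mu t y) (sigma1 t y) (sigma2 t y) -> us = 0) /\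
    (in_A1 q sigma0 (mu t y) (sigma1 t y) (sigma2 t y) Ax -> us = 1) /\
    (~ in_A0 q sigma0 (mu t y) (sigma1 t y) (sigma2 t y) ->
     ~ in_A1 q sigma0 (mu t y) (sigma1 t y) (sigma2 t y) Ax ->
     us = ((sigma1 t y ^ 2 + sigma2 t y ^ 2) * q - mu t y * sigma0 * sigma1 t y)
          / (sigma0 ^ 2 * sigma2 t y ^ 2 * Ax)) /\
    0 <= us <= 1 /\
    (forall u a, 0 <= u <= 1 ->
       hjb_term p q sigma0 (mu t y) (sigma1 t y) (sigma2 t y) Vx Vxx u a
       <= hjb_term p q sigma0 (mu t y) (sigma1 t y) (sigma2 t y) Vx Vxx us as_) /\
    (forall u a, 0 <= u <= 1 ->
       hjb_term p q sigma0 (mu t y) (sigma1 t y) (sigma2 t y) Vx Vxx u a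
       = hjb_term p q sigma0 (mu t y) (sigma1 t y) (sigma2 t y) Vx Vxx us as_ ->
       u = us /\ a = as_).
Proof.
Proof.
  intros t x y Ht Ax Vx Vxx us as_.
  assert (HAx : 0 < Ax).
  { unfold Ax, sahara_A. apply Rdiv_lt_0_compat; [lra|]. apply sqrt_lt_R0.
    assert (0 < b ^ 2) by (apply pow_lt; lra). pose proof (pow2_ge_0 (x - d)). lra. }
  pose proof (hU'pos x) as HP.
  assert (E : U'' x = - (Ax * U' x)).
  { unfold Ax. rewrite <- (hA x). field. lra. }
  unfold Vxx. rewrite E.
  exact (core p q sigma0 (mu t y) (sigma1 t y) (sigma2 t y) Ax (U' x) (Vtilde t y)
           hs0 (hs1 t y) (hs2 t y) (hmu t y) HAx HP (hV t y Ht)).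
Qed.
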